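(* Let $M$ be a timelike surface in $\mathbb{R}^{3,1}$ with a canonical null direction with respect to a constant unit spacelike vector $Z$, such that $II(Z^\top,Z^\top)\neq0$ everywhere. Then the normal curvature of $M$ is $$K_N=a\,|II(Z^\top,Z^\top)|.$$
   Context: $\mathbb{R}^{3,1}$ is $\mathbb{R}^{4}$ with the metric $-dx_1^2+dx_2^2+dx_3^2+dx_4^2$. A surface is timelike if the induced metric has signature $(1,1)$ (its normal bundle is then spacelike); a vector $v$ is lightlike if $v\ne0$ and $\langle v,v\rangle=0$. For a constant vector $Z$, $Z=Z^\top+Z^\perp$ along $M$; $M$ has a canonical null direction with respect to $Z$ if $Z^\top$ is lightlike everywhere on $M$. $W$ is the unique lightlike tangent field with $\langle Z^\top,W\rangle=-1$; $a:=\langle II(W,W),Z^\perp\rangle$ with $II$ the second fundamental form; $A_\xi$ is the shape operator, $\langle A_\xi X,Y\rangle=\langle II(X,Y),\xi\rangle$. Set $\nu:=II(Z^\top,Z^\top)/|II(Z^\top,Z^\top)|$ (a unit normal orthogonal to $Z^\perp$), $e_1=(Z^\top+W)/\sqrt2$, $e_2=(Z^\top-W)/\sqrt2$. The normal curvature is defined as $K_N:=\langle (A_{Z^\perp}\circ A_\nu-A_\nu\circ A_{Z^\perp})(e_1),e_2\rangle$. *)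

(* Defs.v *)
From Stdlib Require Import Reals.
Open Scope R_scope.

Record V4 := mkV4 { x1 : R; x2 : R; x3 : R; x4 : R }.

Definition vzero : V4 := mkV4 0 0 0 0.
Definition vadd (a b : V4) : V4 :=
  mkV4 (x1 a + x1 b) (x2 a + x2 b) (x3 a + x3 b) (x4 a + x4 b).
Definition vscal (c : R) (a : V4) : V4 :=
  mkV4 (c * x1 a) (c * x2 a) (c * x3 a) (c * x4 a).
Definition vsub (a b : V4) : V4 := vadd a (vscal (-1) b).

Definition mink (a b : V4) : R :=
  - x1 a * x1 b + x2 a * x2 b + x3 a * x3 b + x4 a * x4 b.

Definition vnorm (a : V4) : R := sqrt (mink a a).

Definition vderiv (c : R -> V4) (t : R) (d : V4) : Prop :=
  derivable_pt_lim (fun s => x1 (c s)) t (x1 d) /\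
  derivable_pt_lim (fun s => x2 (c s)) t (x2 d) /\
  derivable_pt_lim (fun s => x3 (c s)) t (x3 d) /\
  derivable_pt_lim (fun s => x4 (c s)) t (x4 d).

Definition is_pd_u (U : R -> R -> Prop) (g h : R -> R -> V4) : Prop :=
  forall u v, U u v -> vderiv (fun t => g t v) u (h u v).
Definition is_pd_v (U : R -> R -> Prop) (g h : R -> R -> V4) : Prop :=
  forall u v, U u v -> vderiv (fun t => g u t) v (h u v).

Definition open2 (U : R -> R -> Prop) : Prop :=
  forall u v, U u v -> exists eps, 0 < eps /\
    forall u' v', Rabs (u' - u) < eps -> Rabs (v' - v) < eps -> U u' v'.

(** Pointwise second-order data of a parametrization f at a point:
    fu = f_u, fv = f_v, fuu = f_uu, fuv = f_uv = f_vu, fvv = f_vv. *)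
Record Frame := mkFrame { fu : V4; fv : V4; fuu : V4; fuv : V4; fvv : V4 }.

Definition gE (fr : Frame) := mink (fu fr) (fu fr).
Definition gF (fr : Frame) := mink (fu fr) (fv fr).
Definition gG (fr : Frame) := mink (fv fr) (fv fr).
Definition gdet (fr : Frame) := gE fr * gG fr - gF fr * gF fr.

(** Timelike: the induced metric (2x2 symmetric) has signature (1,1),
    i.e. negative determinant. *)
Definition timelike_at (fr : Frame) : Prop := gdet fr < 0.

(** Tangent vectors are given by coordinates (c1,c2) in the basis f_u, f_v. *)
Definition tang (fr : Frame) (c : R * R) : V4 :=
  vadd (vscal (fst c) (fu fr)) (vscal (snd c) (fv fr)).

(** The tangent vector T with <T,f_u> = h1 and <T,f_v> = h2 (coordinates). *)
Definition raise (fr : Frame) (h1 h2 : R) : R * R :=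
  ((gG fr * h1 - gF fr * h2) / gdet fr, (- gF fr * h1 + gE fr * h2) / gdet fr).

(** Coordinates of the tangent part X^T of an ambient vector X. *)
Definition tcoord (fr : Frame) (X : V4) : R * R :=
  raise fr (mink X (fu fr)) (mink X (fv fr)).
Definition tproj (fr : Frame) (X : V4) : V4 := tang fr (tcoord fr X).
Definition nproj (fr : Frame) (X : V4) : V4 := vsub X (tproj fr X).

(** Second fundamental form: normal part of D_X Y for coordinate fields. *)
Definition II (fr : Frame) (a b : R * R) : V4 :=
  nproj fr (vadd (vscal (fst a * fst b) (fuu fr))
             (vadd (vscal (fst a * snd b + snd a * fst b) (fuv fr))
                   (vscal (snd a * snd b) (fvv fr)))).

(** Shape operator: <A_xi X, Y> = <II(X,Y), xi>. *)
Definition shape (fr : Frame) (xi : V4) (X : R * R) : R * R :=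
  raise fr (mink (II fr X (1, 0)) xi) (mink (II fr X (0, 1)) xi).

Definition csub (a b : R * R) : R * R := (fst a - fst b, snd a - snd b).

Definition Ztc (fr : Frame) (Z : V4) : R * R := tcoord fr Z.
Definition Zperp (fr : Frame) (Z : V4) : V4 := nproj fr Z.

Definition nuv (fr : Frame) (Z : V4) : V4 :=
  let h := II fr (Ztc fr Z) (Ztc fr Z) in vscal (/ vnorm h) h.

(** Normal curvature, given the coordinates w of W. *)
Definition KN (fr : Frame) (Z : V4) (w : R * R) : R :=
  let zt := Ztc fr Z in
  let e1 := ((fst zt + fst w) / sqrt 2, (snd zt + snd w) / sqrt 2) in
  let e2 := ((fst zt - fst w) / sqrt 2, (snd zt - snd w) / sqrt 2) in
  let zp := Zperp fr Z in
  let nu := nuv fr Z in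
  mink (tang fr (csub (shape fr zp (shape fr nu e1))
                      (shape fr nu (shape fr zp e1))))
       (tang fr e2).

Definition acoef (fr : Frame) (Z : V4) (w : R * R) : R :=
  mink (II fr w w) (Zperp fr Z).

(* Main.v *)
Require Import Defs.
From Stdlib Require Import Reals Lra Psatz.
From Coquelicot Require Import Coquelicot.
Open Scope R_scope.
Lemma mink_sym a b : mink a b = mink b a.
Proof. unfold mink; ring. Qed.
Lemma nproj_add fr A B xi : mink (nproj fr (vadd A B)) xi = mink (nproj fr A) xi + mink (nproj fr B) xi.
Proof. destruct fr as [a b c d e]. unfold nproj, tproj, tcoord, raise, tang, vsub, vadd, vscal, mink, Rdiv; simpl. ring. Qed.
Lemma nproj_scal fr k A xi : mink (nproj fr (vscal k A)) xi = k * mink (nproj fr A) xi.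
Proof. destruct fr as [a b c d e]. unfold nproj, tproj, tcoord, raise, tang, vsub, vadd, vscal, mink, Rdiv; simpl. ring. Qed.
Lemma mink_tang_r fr X c : mink X (tang fr c) = fst c * mink X (fu fr) + snd c * mink X (fv fr).
Proof. unfold tang, vadd, vscal, mink; simpl. ring. Qed.
Lemma mink_scal_l k A B : mink (vscal k A) B = k * mink A B.
Proof. unfold vscal, mink; simpl. ring. Qed.
Lemma mink_vzero A : mink vzero A = 0.
Proof. unfold vzero, mink; simpl. ring. Qed.
Definition gform (E F G : R) (c d : R*R) : R :=
  fst c*fst d*E + (fst c*snd d + snd c*fst d)*F + snd c*snd d*G.
Definition rs (E F G h1 h2 : R) : R*R :=
  ((G*h1 - F*h2)/(E*G-F*F), (-F*h1+E*h2)/(E*G-F*F)).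
Definition shp E F G n11 n12 n22 (X : R*R) :=
  rs E F G (fst X*n11 + snd X*n12) (fst X*n12 + snd X*n22).
Definition bf n11 n12 n22 (X Y : R*R) :=
  fst X*fst Y*n11 + (fst X*snd Y + snd X*fst Y)*n12 + snd X*snd Y*n22.

Lemma gshp E F G n11 n12 n22 X Y : E*G-F*F <> 0 ->
  gform E F G (shp E F G n11 n12 n22 X) Y = bf n11 n12 n22 X Y.
Proof. intros. destruct X, Y. unfold gform, shp, rs, bf; simpl. field; auto. Qed.

Lemma cross (x1 x2 y1 y2 t1 t2 : R) : x1*t1 + x2*t2 = 0 -> y1*t1 + y2*t2 = 0 ->
  (t1 <> 0 \/ t2 <> 0) -> x1*y2 = x2*y1.
Proof.
intros H1 H2 [Ht|Ht].
- apply (Rmult_eq_reg_r t1); [|auto].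
  replace (x1*y2*t1) with (y2*(x1*t1+x2*t2) - x2*y2*t2) by ring.
  replace (x2*y1*t1) with (x2*(y1*t1+y2*t2) - x2*y2*t2) by ring.
  rewrite H1, H2; ring.
- apply (Rmult_eq_reg_r t2); [|auto].
  replace (x1*y2*t2) with (x1*(y1*t1+y2*t2) - x1*y1*t1) by ring.
  replace (x2*y1*t2) with (y1*(x1*t1+x2*t2) - x1*y1*t1) by ring.
  rewrite H1, H2; ring.
Qed.

Lemma final_core E F G a b11 b12 b22 t1 t2 w1 w2 s :
 E*G-F*F <> 0 -> s*s = 2 -> s <> 0 ->
 gform E F G (t1,t2) (t1,t2) = 0 -> gform E F G (t1,t2) (w1,w2) = -1 ->
 let l1 := E*t1 + F*t2 in let l2 := F*t1 + G*t2 in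
 let e1 := ((t1+w1)/s, (t2+w2)/s) in let e2 := ((t1-w1)/s, (t2-w2)/s) in
 gform E F G (fst (shp E F G (a*l1*l1) (a*l1*l2) (a*l2*l2) (shp E F G b11 b12 b22 e1)) -
   fst (shp E F G b11 b12 b22 (shp E F G (a*l1*l1) (a*l1*l2) (a*l2*l2) e1)),
   snd (shp E F G (a*l1*l1) (a*l1*l2) (a*l2*l2) (shp E F G b11 b12 b22 e1)) -
   snd (shp E F G b11 b12 b22 (shp E F G (a*l1*l1) (a*l1*l2) (a*l2*l2) e1))) e2
 = a * bf b11 b12 b22 (t1,t2) (t1,t2).
Proof.
intros HD Hs Hs0 Htt Htw l1 l2 e1 e2.
assert (SZ : forall V, shp E F G (a*l1*l1) (a*l1*l2) (a*l2*l2) V =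
   (a * gform E F G V (t1,t2) * t1, a * gform E F G V (t1,t2) * t2)).
{ intros [v1 v2]. unfold shp, rs, gform, l1, l2; simpl. f_equal; field; auto. }
rewrite !SZ.
set (X := shp E F G b11 b12 b22 e1).
set (k := a * gform E F G e1 (t1, t2)).
assert (HX : gform E F G X (t1,t2) = bf b11 b12 b22 e1 (t1,t2)) by (apply gshp; auto).
assert (HY : gform E F G (shp E F G b11 b12 b22 (k*t1, k*t2)) e2 = bf b11 b12 b22 (k*t1,k*t2) e2)
  by (apply gshp; auto).
assert (E1 : gform E F G (fst X - fst (shp E F G b11 b12 b22 (k * t1, k * t2)),
   snd X - snd (shp E F G b11 b12 b22 (k * t1, k * t2))) e2 =
   gform E F G X e2 - gform E F G (shp E F G b11 b12 b22 (k*t1,k*t2)) e2)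
  by (unfold gform; simpl; ring).
assert (G1 : gform E F G (t1,t2) e2 = 1/s).
{ replace (gform E F G (t1,t2) e2) with ((gform E F G (t1,t2) (t1,t2) - gform E F G (t1,t2) (w1,w2))/s)
    by (unfold gform, e2; simpl; field; auto).
  rewrite Htt, Htw. field; auto. }
assert (G2 : gform E F G e1 (t1,t2) = -1/s).
{ replace (gform E F G e1 (t1,t2)) with ((gform E F G (t1,t2) (t1,t2) + gform E F G (t1,t2) (w1,w2))/s)
    by (unfold gform, e1; simpl; field; auto).
  rewrite Htt, Htw. field; auto. }
cbn [fst snd].
replace (gform E F G (a * gform E F G X (t1, t2) * t1 - fst (shp E F G b11 b12 b22 (k * t1, k * t2)),
   a * gform E F G X (t1, t2) * t2 - snd (shp E F G b11 b12 b22 (k * t1, k * t2))) e2)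
 with (a * gform E F G X (t1,t2) * gform E F G (t1,t2) e2 - gform E F G (shp E F G b11 b12 b22 (k*t1,k*t2)) e2)
 by (unfold gform; simpl; ring).
rewrite HY, HX, G1. unfold k. rewrite G2.
unfold bf, e1, e2; simpl.
match goal with |- _ = a * ?B => transitivity (2 * (a * B) / (s*s)) end.
field; auto. rewrite Hs. field.
Qed.

Lemma abc E F G p q r t1 t2 w1 w2 :
  gform E F G (t1,t2) (t1,t2) = 0 -> gform E F G (t1,t2) (w1,w2) = -1 ->
  p*t1 + q*t2 = 0 -> q*t1 + r*t2 = 0 ->
  let a := bf p q r (w1,w2) (w1,w2) in
  let l1 := E*t1 + F*t2 in let l2 := F*t1 + G*t2 in
  p = a*l1*l1 /\ q = a*l1*l2 /\ r = a*l2*l2.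
Proof.
intros Htt Htw H1 H2 a l1 l2.
assert (Lt : l1*t1 + l2*t2 = 0) by (rewrite <- Htt; unfold gform, l1, l2; simpl; ring).
assert (Lw : l1*w1 + l2*w2 = -1) by (rewrite <- Htw; unfold gform, l1, l2; simpl; ring).
assert (Tnz : t1 <> 0 \/ t2 <> 0).
{ destruct (Req_dec t1 0) as [e1|e1]; [|now left].
  destruct (Req_dec t2 0) as [e2|e2]; [|now right].
  exfalso. unfold l1, l2 in Lw. rewrite e1, e2 in Lw. lra. }
assert (C1 : p*l2 = q*l1) by (apply (cross p q l1 l2 t1 t2); auto).
assert (C2 : q*l2 = r*l1) by (apply (cross q r l1 l2 t1 t2); auto).
set (al := -(p*w1+q*w2)). set (be := -(q*w1+r*w2)).
assert (P1 : p = al*l1).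
{ unfold al. transitivity (- p * (l1*w1+l2*w2)); [rewrite Lw; ring|].
  replace (- p * (l1*w1+l2*w2)) with (-(p*l1*w1 + (p*l2)*w2)) by ring. rewrite C1. ring. }
assert (Q1 : q = al*l2).
{ unfold al. transitivity (- q * (l1*w1+l2*w2)); [rewrite Lw; ring|].
  replace (- q * (l1*w1+l2*w2)) with (-((q*l1)*w1 + q*l2*w2)) by ring. rewrite <- C1. ring. }
assert (Q2 : q = be*l1).
{ unfold be. transitivity (- q * (l1*w1+l2*w2)); [rewrite Lw; ring|].
  replace (- q * (l1*w1+l2*w2)) with (-(q*l1*w1 + (q*l2)*w2)) by ring. rewrite C2. ring. }
assert (R1 : r = be*l2).
{ unfold be. transitivity (- r * (l1*w1+l2*w2)); [rewrite Lw; ring|].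
  replace (- r * (l1*w1+l2*w2)) with (-((r*l1)*w1 + r*l2*w2)) by ring. rewrite <- C2. ring. }
assert (Ha : a = -al*w1 - be*w2) by (unfold a, al, be, bf; simpl; ring).
assert (A1 : a*l1 = al).
{ rewrite Ha. replace ((- al * w1 - be * w2) * l1) with (- al*w1*l1 - (be*l1)*w2) by ring.
  rewrite <- Q2, Q1. transitivity (-al*(l1*w1+l2*w2)); [ring|]. rewrite Lw; ring. }
assert (A2 : a*l2 = be).
{ rewrite Ha. replace ((- al * w1 - be * w2) * l2) with (- (al*l2)*w1 - be*w2*l2) by ring.
  rewrite <- Q1, Q2. transitivity (-be*(l1*w1+l2*w2)); [ring|]. rewrite Lw; ring. }
split; [|split].
- rewrite A1; exact P1.
- rewrite A1; exact Q1.
- rewrite A2; exact R1.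
Qed.
Lemma mink_nproj fr X Y : gdet fr <> 0 ->
  mink (nproj fr X) (nproj fr Y) = mink X Y - (fst (tcoord fr Y) * mink X (fu fr) + snd (tcoord fr Y) * mink X (fv fr)).
Proof.
intros HD. destruct fr as [a b c d e]. destruct X, Y, a, b.
unfold gdet, gE, gF, gG in HD. unfold nproj, tproj, tcoord, raise, tang, vsub, vadd, vscal, gdet, gE, gF, gG, mink in *; simpl in *.
field. exact HD.
Qed.

Lemma II_form fr X Y xi : mink (II fr X Y) xi =
  bf (mink (nproj fr (fuu fr)) xi) (mink (nproj fr (fuv fr)) xi) (mink (nproj fr (fvv fr)) xi) X Y.
Proof. unfold II. rewrite !nproj_add, !nproj_scal. unfold bf. ring. Qed.
Lemma mink_tang fr c d : mink (tang fr c) (tang fr d) = gform (gE fr) (gF fr) (gG fr) c d.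
Proof. destruct c, d. unfold tang, gform, gE, gF, gG, vadd, vscal, mink; simpl. ring. Qed.
Lemma shape_eq fr xi X : shape fr xi X =
  shp (gE fr) (gF fr) (gG fr) (mink (nproj fr (fuu fr)) xi) (mink (nproj fr (fuv fr)) xi) (mink (nproj fr (fvv fr)) xi) X.
Proof. unfold shape, raise. rewrite !II_form. destruct X. unfold shp, rs, bf, gdet, Rdiv; simpl. f_equal; ring. Qed.

Definition qv (fr : Frame) (Z : V4) : R :=
  gG fr * mink Z (fu fr) * mink Z (fu fr) - 2 * gF fr * mink Z (fu fr) * mink Z (fv fr)
  + gE fr * mink Z (fv fr) * mink Z (fv fr).
Lemma q_tproj fr Z : gdet fr <> 0 -> qv fr Z = gdet fr * mink (tproj fr Z) (tproj fr Z).
Proof. intros HD. unfold tproj. rewrite mink_tang. unfold qv, gform, tcoord, raise; simpl.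
  unfold gdet in *. field. exact HD. Qed.

Lemma key2 E F G h1 h2 pa pb pz qa qb qz : E*G-F*F <> 0 ->
  G*h1*h1 - 2*F*h1*h2 + E*h2*h2 = 0 ->
  (qb+qb)*h1*h1 + 2*G*h1*(0+pz) - 2*((pb+qa)*h1*h2 + F*(0+pz)*h2 + F*h1*(0+qz))
   + (pa+pa)*h2*h2 + 2*E*h2*(0+qz) = 0 ->
  (G*h1 - F*h2)/(E*G-F*F) * (pz - ((G*h1-F*h2)/(E*G-F*F)*pa + (-F*h1+E*h2)/(E*G-F*F)*pb))
  + (-F*h1+E*h2)/(E*G-F*F) * (qz - ((G*h1-F*h2)/(E*G-F*F)*qa + (-F*h1+E*h2)/(E*G-F*F)*qb)) = 0.
Proof.
intros HD Hq Hd.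
set (L := (G*h1 - F*h2)/(E*G-F*F) * (pz - ((G*h1-F*h2)/(E*G-F*F)*pa + (-F*h1+E*h2)/(E*G-F*F)*pb))
  + (-F*h1+E*h2)/(E*G-F*F) * (qz - ((G*h1-F*h2)/(E*G-F*F)*qa + (-F*h1+E*h2)/(E*G-F*F)*qb))).
assert (Eq : 2*(E*G-F*F)*L =
  ((qb+qb)*h1*h1 + 2*G*h1*(0+pz) - 2*((pb+qa)*h1*h2 + F*(0+pz)*h2 + F*h1*(0+qz))
   + (pa+pa)*h2*h2 + 2*E*h2*(0+qz))
  - (G*h1*h1 - 2*F*h1*h2 + E*h2*h2) * ((pa+pa)*G + E*(qb+qb) - 2*F*(pb+qa))/(E*G-F*F)).
{ unfold L. field. exact HD. }
rewrite Hd, Hq in Eq.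
assert (H2 : 2*(E*G-F*F)*L = 0) by (rewrite Eq; field; exact HD).
apply Rmult_integral in H2. destruct H2 as [H2|H2]; [|exact H2].
apply Rmult_integral in H2. destruct H2; [lra|contradiction].
Qed.

Lemma key_vec fr Z a' b' : gdet fr <> 0 -> qv fr Z = 0 ->
  (mink b' (fv fr) + mink (fv fr) b') * mink Z (fu fr) * mink Z (fu fr)
  + 2 * gG fr * mink Z (fu fr) * (mink vzero (fu fr) + mink Z a')
  - 2 * ((mink a' (fv fr) + mink (fu fr) b') * mink Z (fu fr) * mink Z (fv fr)
         + gF fr * (mink vzero (fu fr) + mink Z a') * mink Z (fv fr)
         + gF fr * mink Z (fu fr) * (mink vzero (fv fr) + mink Z b'))
  + (mink a' (fu fr) + mink (fu fr) a') * mink Z (fv fr) * mink Z (fv fr)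
  + 2 * gE fr * mink Z (fv fr) * (mink vzero (fv fr) + mink Z b') = 0 ->
  fst (tcoord fr Z) * mink (nproj fr a') (nproj fr Z) + snd (tcoord fr Z) * mink (nproj fr b') (nproj fr Z) = 0.
Proof.
intros HD Hq Hd.
rewrite !mink_nproj by exact HD.
rewrite !mink_vzero in Hd.
rewrite (mink_sym (fv fr) b'), (mink_sym (fu fr) b'), (mink_sym (fu fr) a'), (mink_sym Z a'), (mink_sym Z b') in Hd.
unfold qv in Hq. unfold tcoord, raise. unfold gdet in *. cbn [fst snd].
eapply key2; eauto.
Qed.

Lemma final2d E F G p q r b11 b12 b22 t1 t2 w1 w2 s :
 E*G-F*F <> 0 -> s*s = 2 -> s <> 0 ->
 gform E F G (t1,t2) (t1,t2) = 0 -> gform E F G (t1,t2) (w1,w2) = -1 ->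
 p*t1 + q*t2 = 0 -> q*t1 + r*t2 = 0 ->
 gform E F G (csub (shp E F G p q r (shp E F G b11 b12 b22 ((t1+w1)/s,(t2+w2)/s)))
                   (shp E F G b11 b12 b22 (shp E F G p q r ((t1+w1)/s,(t2+w2)/s))))
   ((t1-w1)/s,(t2-w2)/s)
 = bf p q r (w1,w2) (w1,w2) * bf b11 b12 b22 (t1,t2) (t1,t2).
Proof.
intros HD Hs Hs0 Htt Htw H1 H2.
pose proof (abc E F G p q r t1 t2 w1 w2 Htt Htw H1 H2) as Habc. cbv zeta in Habc.
remember (bf p q r (w1, w2) (w1, w2)) as a eqn:Ea.
destruct Habc as [Hp [Hq Hr]].
rewrite Hp, Hq, Hr.
exact (final_core E F G a b11 b12 b22 t1 t2 w1 w2 s HD Hs Hs0 Htt Htw).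
Qed.

Lemma Btt fr Z : mink (II fr (Ztc fr Z) (Ztc fr Z)) (nuv fr Z) = vnorm (II fr (Ztc fr Z) (Ztc fr Z)).
Proof.
unfold nuv. cbv zeta. set (h := II fr (Ztc fr Z) (Ztc fr Z)).
replace (mink h (vscal (/ vnorm h) h)) with (/ vnorm h * mink h h) by (unfold mink, vscal; simpl; ring).
unfold vnorm. destruct (Rle_lt_dec (mink h h) 0) as [Hle|Hlt].
- rewrite (sqrt_neg_0 _ Hle). rewrite Rinv_0. ring.
- assert (Hs : 0 < sqrt (mink h h)) by (apply sqrt_lt_R0; exact Hlt).
  rewrite <- (sqrt_sqrt (mink h h)) at 2 by lra. field. lra.
Qed.

Lemma dpoly (E F G h1 h2 : R -> R) x dE dF dG d1 d2 :
  derivable_pt_lim E x dE -> derivable_pt_lim F x dF -> derivable_pt_lim G x dG ->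
  derivable_pt_lim h1 x d1 -> derivable_pt_lim h2 x d2 ->
  derivable_pt_lim (fun s => G s * h1 s * h1 s - 2 * F s * h1 s * h2 s + E s * h2 s * h2 s) x
   (dG * h1 x * h1 x + 2 * G x * h1 x * d1 - 2 * (dF * h1 x * h2 x + F x * d1 * h2 x + F x * h1 x * d2)
    + dE * h2 x * h2 x + 2 * E x * h2 x * d2).
Proof.
intros HE HF HG H1 H2.
apply is_derive_Reals in HE. apply is_derive_Reals in HF. apply is_derive_Reals in HG.
apply is_derive_Reals in H1. apply is_derive_Reals in H2.
apply is_derive_Reals.
auto_derive.
- repeat split; eexists; eauto.
- replace (Derive (fun y => G y) x) with dG by (symmetry; apply is_derive_unique; exact HG).
  replace (Derive (fun y => F y) x) with dF by (symmetry; apply is_derive_unique; exact HF).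
  replace (Derive (fun y => E y) x) with dE by (symmetry; apply is_derive_unique; exact HE).
  replace (Derive (fun y => h1 y) x) with d1 by (symmetry; apply is_derive_unique; exact H1).
  replace (Derive (fun y => h2 y) x) with d2 by (symmetry; apply is_derive_unique; exact H2).
  ring.
Qed.

Lemma d4 (A1 A2 A3 A4 B1 B2 B3 B4 : R -> R) x a1 a2 a3 a4 b1 b2 b3 b4 :
  derivable_pt_lim A1 x a1 -> derivable_pt_lim A2 x a2 -> derivable_pt_lim A3 x a3 ->
  derivable_pt_lim A4 x a4 -> derivable_pt_lim B1 x b1 -> derivable_pt_lim B2 x b2 ->
  derivable_pt_lim B3 x b3 -> derivable_pt_lim B4 x b4 ->
  derivable_pt_lim (fun s => - A1 s * B1 s + A2 s * B2 s + A3 s * B3 s + A4 s * B4 s) x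
   ((- a1 * B1 x + A2 x * 0 + a2 * B2 x + a3 * B3 x + a4 * B4 x)
    + (- A1 x * b1 + A2 x * b2 + A3 x * b3 + A4 x * b4)).
Proof.
intros HA1 HA2 HA3 HA4 HB1 HB2 HB3 HB4.
apply is_derive_Reals in HA1. apply is_derive_Reals in HA2. apply is_derive_Reals in HA3.
apply is_derive_Reals in HA4. apply is_derive_Reals in HB1. apply is_derive_Reals in HB2.
apply is_derive_Reals in HB3. apply is_derive_Reals in HB4.
apply is_derive_Reals.
auto_derive.
- repeat split; eexists; eauto.
- replace (Derive (fun y => A1 y) x) with a1 by (symmetry; apply is_derive_unique; auto).
  replace (Derive (fun y => A2 y) x) with a2 by (symmetry; apply is_derive_unique; auto).
  replace (Derive (fun y => A3 y) x) with a3 by (symmetry; apply is_derive_unique; auto).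
  replace (Derive (fun y => A4 y) x) with a4 by (symmetry; apply is_derive_unique; auto).
  replace (Derive (fun y => B1 y) x) with b1 by (symmetry; apply is_derive_unique; auto).
  replace (Derive (fun y => B2 y) x) with b2 by (symmetry; apply is_derive_unique; auto).
  replace (Derive (fun y => B3 y) x) with b3 by (symmetry; apply is_derive_unique; auto).
  replace (Derive (fun y => B4 y) x) with b4 by (symmetry; apply is_derive_unique; auto).
  ring.
Qed.

Lemma dmink (a b : R -> V4) x a' b' : vderiv a x a' -> vderiv b x b' ->
  derivable_pt_lim (fun s => mink (a s) (b s)) x (mink a' (b x) + mink (a x) b').
Proof.
intros [A1 [A2 [A3 A4]]] [B1 [B2 [B3 B4]]].
replace (mink a' (b x) + mink (a x) b') with
  ((- x1 a' * x1 (b x) + x2 (a x) * 0 + x2 a' * x2 (b x) + x3 a' * x3 (b x) + x4 a' * x4 (b x))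
    + (- x1 (a x) * x1 b' + x2 (a x) * x2 b' + x3 (a x) * x3 b' + x4 (a x) * x4 b'))
  by (unfold mink; ring).
exact (d4 _ _ _ _ _ _ _ _ x _ _ _ _ _ _ _ _ A1 A2 A3 A4 B1 B2 B3 B4).
Qed.

Lemma vderiv_const (Z : V4) x : vderiv (fun _ => Z) x vzero.
Proof. unfold vderiv; simpl; repeat split; apply derivable_pt_lim_const. Qed.

Lemma dzero (f : R -> R) x eps : 0 < eps -> (forall s, Rabs (s - x) < eps -> f s = 0) ->
  derivable_pt_lim f x 0.
Proof.
intros He Hz e Hepos. exists (mkposreal eps He). intros h Hh Hlt. simpl in Hlt.
rewrite (Hz (x+h)) by (replace (x+h-x) with h by ring; exact Hlt).
rewrite (Hz x) by (replace (x-x) with 0 by ring; rewrite Rabs_R0; exact He).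
replace ((0-0)/h - 0) with 0 by (field; exact Hh). rewrite Rabs_R0. exact Hepos.
Qed.

Theorem mainTheorem13
  (U : R -> R -> Prop) (f fu_ fv_ fuu_ fuv_ fvv_ : R -> R -> V4) (Z : V4) :
  open2 U ->
  is_pd_u U f fu_ -> is_pd_v U f fv_ ->
  is_pd_u U fu_ fuu_ -> is_pd_v U fu_ fuv_ ->
  is_pd_u U fv_ fuv_ -> is_pd_v U fv_ fvv_ ->
  (* M is timelike *)
  (forall u v, U u v ->
     timelike_at (mkFrame (fu_ u v) (fv_ u v) (fuu_ u v) (fuv_ u v) (fvv_ u v))) ->
  (* Z constant unit spacelike *)
  mink Z Z = 1 ->
  (* canonical null direction: Z^T lightlike everywhere *)
  (forall u v, U u v ->
     let fr := mkFrame (fu_ u v) (fv_ u v) (fuu_ u v) (fuv_ u v) (fvv_ u v) in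
     tproj fr Z <> vzero /\ mink (tproj fr Z) (tproj fr Z) = 0) ->
  (* II(Z^T,Z^T) <> 0 everywhere *)
  (forall u v, U u v ->
     let fr := mkFrame (fu_ u v) (fv_ u v) (fuu_ u v) (fuv_ u v) (fvv_ u v) in
     II fr (Ztc fr Z) (Ztc fr Z) <> vzero) ->
  forall u v, U u v ->
  let fr := mkFrame (fu_ u v) (fv_ u v) (fuu_ u v) (fuv_ u v) (fvv_ u v) in
  (* W: the lightlike tangent vector with <Z^T, W> = -1 *)
  forall w : R * R,
    tang fr w <> vzero ->
    mink (tang fr w) (tang fr w) = 0 ->
    mink (tproj fr Z) (tang fr w) = -1 ->
    KN fr Z w = acoef fr Z w * vnorm (II fr (Ztc fr Z) (Ztc fr Z)).
Proof.
intros Hopen _ _ Hfuu Hfuv Hfvu Hfvv Htl _ Hnull _ u v Huv fr w _ _ Hzw.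
assert (Q0 : forall u' v', U u' v' ->
  qv (mkFrame (fu_ u' v') (fv_ u' v') (fuu_ u' v') (fuv_ u' v') (fvv_ u' v')) Z = 0).
{ intros u' v' H'. rewrite q_tproj.
  - destruct (Hnull u' v' H') as [_ H0]. rewrite H0. ring.
  - apply Rlt_not_eq. exact (Htl u' v' H'). }
assert (HD : gdet fr <> 0) by (apply Rlt_not_eq; exact (Htl u v Huv)).
destruct (Hopen u v Huv) as [eps [Heps Hball]].
assert (Ku : fst (tcoord fr Z) * mink (nproj fr (fuu fr)) (nproj fr Z)
           + snd (tcoord fr Z) * mink (nproj fr (fuv fr)) (nproj fr Z) = 0).
{ apply key_vec; [exact HD | exact (Q0 u v Huv) |].
  pose proof (dpoly (fun s => mink (fu_ s v) (fu_ s v)) (fun s => mink (fu_ s v) (fv_ s v))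
     (fun s => mink (fv_ s v) (fv_ s v)) (fun s => mink Z (fu_ s v)) (fun s => mink Z (fv_ s v)) u
     _ _ _ _ _
     (dmink (fun s => fu_ s v) (fun s => fu_ s v) u _ _ (Hfuu u v Huv) (Hfuu u v Huv))
     (dmink (fun s => fu_ s v) (fun s => fv_ s v) u _ _ (Hfuu u v Huv) (Hfvu u v Huv))
     (dmink (fun s => fv_ s v) (fun s => fv_ s v) u _ _ (Hfvu u v Huv) (Hfvu u v Huv))
     (dmink (fun _ => Z) (fun s => fu_ s v) u _ _ (vderiv_const Z u) (Hfuu u v Huv))
     (dmink (fun _ => Z) (fun s => fv_ s v) u _ _ (vderiv_const Z u) (Hfvu u v Huv))) as Hd.
  assert (Hz : derivable_pt_lim (fun s => mink (fv_ s v) (fv_ s v) * mink Z (fu_ s v) * mink Z (fu_ s v)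
      - 2 * mink (fu_ s v) (fv_ s v) * mink Z (fu_ s v) * mink Z (fv_ s v)
      + mink (fu_ s v) (fu_ s v) * mink Z (fv_ s v) * mink Z (fv_ s v)) u 0).
  { apply (dzero _ u eps Heps). intros s Hs.
    exact (Q0 s v (Hball s v Hs (ltac:(replace (v-v) with 0 by ring; rewrite Rabs_R0; exact Heps)))). }
  pose proof (uniqueness_limite _ _ _ _ Hd Hz) as E. exact E. }
assert (Kv : fst (tcoord fr Z) * mink (nproj fr (fuv fr)) (nproj fr Z)
           + snd (tcoord fr Z) * mink (nproj fr (fvv fr)) (nproj fr Z) = 0).
{ apply key_vec; [exact HD | exact (Q0 u v Huv) |].
  pose proof (dpoly (fun s => mink (fu_ u s) (fu_ u s)) (fun s => mink (fu_ u s) (fv_ u s))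
     (fun s => mink (fv_ u s) (fv_ u s)) (fun s => mink Z (fu_ u s)) (fun s => mink Z (fv_ u s)) v
     _ _ _ _ _
     (dmink (fun s => fu_ u s) (fun s => fu_ u s) v _ _ (Hfuv u v Huv) (Hfuv u v Huv))
     (dmink (fun s => fu_ u s) (fun s => fv_ u s) v _ _ (Hfuv u v Huv) (Hfvv u v Huv))
     (dmink (fun s => fv_ u s) (fun s => fv_ u s) v _ _ (Hfvv u v Huv) (Hfvv u v Huv))
     (dmink (fun _ => Z) (fun s => fu_ u s) v _ _ (vderiv_const Z v) (Hfuv u v Huv))
     (dmink (fun _ => Z) (fun s => fv_ u s) v _ _ (vderiv_const Z v) (Hfvv u v Huv))) as Hd.
  assert (Hz : derivable_pt_lim (fun s => mink (fv_ u s) (fv_ u s) * mink Z (fu_ u s) * mink Z (fu_ u s)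
      - 2 * mink (fu_ u s) (fv_ u s) * mink Z (fu_ u s) * mink Z (fv_ u s)
      + mink (fu_ u s) (fu_ u s) * mink Z (fv_ u s) * mink Z (fv_ u s)) v 0).
  { apply (dzero _ v eps Heps). intros s Hs.
    exact (Q0 u s (Hball u s (ltac:(replace (u-u) with 0 by ring; rewrite Rabs_R0; exact Heps)) Hs)). }
  pose proof (uniqueness_limite _ _ _ _ Hd Hz) as E. exact E. }
assert (Htt : gform (gE fr) (gF fr) (gG fr) (tcoord fr Z) (tcoord fr Z) = 0).
{ rewrite <- mink_tang. exact (proj2 (Hnull u v Huv)). }
assert (Htw : gform (gE fr) (gF fr) (gG fr) (tcoord fr Z) w = -1).
{ rewrite <- mink_tang. exact Hzw. }
rewrite <- Btt. unfold acoef. rewrite !II_form.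
unfold KN. cbv zeta. rewrite mink_tang, !shape_eq.
unfold Zperp, Ztc.
set (s := sqrt 2).
assert (Hs : s * s = 2) by (apply sqrt_sqrt; lra).
assert (Hs0 : s <> 0) by (unfold s; apply Rgt_not_eq, Rlt_gt, sqrt_lt_R0; lra).
set (t := tcoord fr Z) in *. clearbody t. destruct t as [t1 t2].
destruct w as [w1 w2]. cbn [fst snd] in *.
apply final2d; auto.
- rewrite <- Ku. ring.
- rewrite <- Kv. ring.
Qed.
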